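(* Assume $V=L$. Let $\zeta\in\Xi$, $X\in\mathrm{IPS}_\zeta$, and let $A\subseteq X$ be a set which has the Baire property relative to $X$ and is not meager relative to $X$. Then there is $Y\in\mathrm{IPS}_\zeta$ with $Y\subseteq A$.
   Context: $T$ is the set of all nonempty finite sequences of countable ordinals, ordered by strict extension $\subset$. $\Xi$ is the set of all at most countable $\xi\subseteq T$ closed downward under $\subset$. $D=2^\omega$; $D^\xi$ is the product of $\xi$ copies of $D$ with the product topology; for $\eta\subseteq\xi$ and $x\in D^\xi$, $x\restriction\eta$ is the restriction. For $\zeta\in\Xi$, $\mathrm{IPS}_\zeta$ is the set of all $X\subseteq D^\zeta$ for which there is a homeomorphism $H$ of $D^\zeta$ onto $X$ such that for all $x_0,x_1\in D^\zeta$ and all $\xi\in\Xi$, $\xi\subseteq\zeta$: $x_0\restriction\xi=x_1\restriction\xi\iff H(x_0)\restriction\xi=H(x_1)\restriction\xi$. *)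

(* Defs.v *)
From HB Require Import structures.
From mathcomp Require Import all_boot all_order all_algebra.
From mathcomp Require Import all_classical topology cantor.
Set Implicit Arguments. Unset Strict Implicit. Unset Printing Implicit Defensive.
Local Open Scope classical_set_scope.

(* The role of omega_1 (the countable ordinals) is played by an arbitrary
   type [Om].  Elements of T are nonempty finite sequences. *)

Definition strict_ext {Om : Type} (s t : seq Om) : Prop :=
  exists u : seq Om, u <> [::] /\ t = s ++ u.

Definition in_Xi {Om : Type} (xi : set (seq Om)) : Prop :=
  [/\ countable xi,
      (forall s, xi s -> s <> [::]) &
      (forall s t, xi t -> strict_ext s t -> s <> [::] -> xi s)].

Definition D := cantor_space.

Definition Dpow {Om : Type} (zeta : set (seq Om)) : topologicalType :=
  prod_topology (fun _ : set_type zeta => D).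

Definition restr_eq {Om : Type} (zeta xi : set (seq Om)) (x y : Dpow zeta) : Prop :=
  forall t : set_type zeta, xi (set_val t) -> x t = y t.

Definition homeomorphism_onto {S S' : topologicalType} (H : S -> S') (X : set S') : Prop :=
  [/\ continuous H, injective H, H @` setT = X &
      (forall U : set S, open U -> exists V : set S', open V /\ H @` U = V `&` X)].

Definition IPS {Om : Type} (zeta : set (seq Om)) (X : set (Dpow zeta)) : Prop :=
  exists H : Dpow zeta -> Dpow zeta,
    homeomorphism_onto H X /\
    forall (x0 x1 : Dpow zeta) (xi : set (seq Om)),
      in_Xi xi -> xi `<=` zeta ->
      (restr_eq xi x0 x1 <-> restr_eq xi (H x0) (H x1)).

Definition nowhere_dense {S : topologicalType} (N : set S) : Prop :=
  interior (closure N) = set0.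

Definition meager {S : topologicalType} (M : set S) : Prop :=
  exists N : nat -> set S, (forall n, nowhere_dense (N n)) /\ M `<=` \bigcup_n N n.

Definition baire_property {S : topologicalType} (A : set S) : Prop :=
  exists U : set S, open U /\ meager ((A `\` U) `|` (U `\` A)).

(* relative to X : in the subspace topology of X (the type [set_type X]) *)
Definition rel_to {S : topologicalType} (X A : set S) : set (set_type X) :=
  fun x : set_type X => A (set_val x).

Definition meager_rel {S : topologicalType} (X A : set S) : Prop :=
  meager (@rel_to _ X A).

Definition baire_property_rel {S : topologicalType} (X A : set S) : Prop :=
  baire_property (@rel_to _ X A).

(* Main.v *)
Require Import Defs.
From HB Require Import structures.
From mathcomp Require Import all_boot all_order all_algebra.
From mathcomp Require Import all_classical topology cantor.
Local Open Scope classical_set_scope.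
From Stdlib Require List.

From mathcomp Require Import zify.

Section ProdGlue.
Set Implicit Arguments. Unset Strict Implicit.
Variables (I : Type) (K : I -> topologicalType).
Lemma T2 (f : prod_topology K) (i : I) (W : set (K i)) :
  nbhs (f i) W -> nbhs f [set g : prod_topology K | W (g i)].
Proof.
move=> Wn.
have h := (@cvg_sup _ _ (fun i => Topological.class
    (initial_topology (fun f : (forall i, K i) => f i))) (@nbhs _ (prod_topology K) f) f _).
have hh : @nbhs _ (prod_topology K) f --> (f : prod_topology K) by apply: cvg_id.
have := ((h _).1 hh i).
move=> H.
apply: H.
have := @initial_continuous _ _ (fun f : (forall i, K i) => f i) f.
move=> /(_ W Wn). done.
Qed.
Lemma T1aux (f : prod_topology K) (s : seq (set (prod_topology K))) :
  (forall E, E \in s -> (exists i (E' : set (K i)), open E' /\ E = [set g | E' (g i)]) /\ E f) ->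
  exists L : seq {i : I & set (K i)},
    (forall p, List.In p L -> nbhs (f (projT1 p)) (projT2 p)) /\
    (forall g : prod_topology K, (forall p, List.In p L -> projT2 p (g (projT1 p))) ->
       forall E, E \in s -> E g).
Proof.
elim: s => [|E s IH] H.
  by exists [::]; split => // g _ E; rewrite in_nil.
have [L [L1 L2]] : exists L : seq {i : I & set (K i)},
    (forall p, List.In p L -> nbhs (f (projT1 p)) (projT2 p)) /\
    (forall g : prod_topology K, (forall p, List.In p L -> projT2 p (g (projT1 p))) ->
       forall E, E \in s -> E g).
  by apply: IH => E' E's; apply: H; rewrite in_cons E's orbT.
have [[i [E' [oE' ->]]] Ef] := H E (mem_head _ _).
exists (existT _ i E' :: L); split.
  move=> p /= [<-|/L1 //] /=.
  by apply: open_nbhs_nbhs; split.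
move=> g Hg E0; rewrite in_cons => /orP [/eqP ->|E0s].
  by apply: (Hg (existT _ i E')); left.
by apply: L2 => // p Lp; apply: Hg; right.
Qed.

Lemma T1 (f : prod_topology K) (A : set (prod_topology K)) :
  nbhs f A -> exists L : seq {i : I & set (K i)},
    (forall p, List.In p L -> nbhs (f (projT1 p)) (projT2 p)) /\
    (forall g : prod_topology K, (forall p, List.In p L -> projT2 p (g (projT1 p))) -> A g).
Proof.
rewrite nbhsE.
move=> [_ [[B sB <-] [C BC Ct] sUBA]].
have /sB [D sD IDeC] := BC.
have [|L [L1 L2]] := @T1aux f (finmap.enum_fset D).
  move=> E ED; split; last first.
    have Ct' : C f := Ct.
    by move: Ct'; rewrite -IDeC; apply.
  have := sD E ED.
  move=> /set_mem [i _ [E' oE' EE]].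
  by exists i, E'; split => //; rewrite -EE.
exists L; split => // g Hg.
apply: sUBA; exists C => //.
change (C g); rewrite -IDeC => E ED; exact: L2.
Qed.
End ProdGlue.

Lemma In_map {A B : Type} (f : A -> B) (x : A) (s : seq A) :
  List.In x s -> List.In (f x) (map f s).
Proof. by elim: s => //= y s IH [->|/IH]; [left|right]. Qed.

Lemma In_catl {A : Type} (x : A) (s1 s2 : seq A) :
  List.In x s1 -> List.In x (s1 ++ s2).
Proof. by elim: s1 => //= y s IH [->|/IH]; [left|right]. Qed.

Lemma In_catr {A : Type} (x : A) (s1 s2 : seq A) :
  List.In x s2 -> List.In x (s1 ++ s2).
Proof. by elim: s1 => //= y s IH /IH; right. Qed.

Lemma In_cat {A : Type} (x : A) (s1 s2 : seq A) :
  List.In x (s1 ++ s2) -> List.In x s1 \/ List.In x s2.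
Proof. elim: s1 => /= [|y s IH]; first by right. by case=> [->|/IH [|]]; [left;left|left;right|right]. Qed.

Section Glue.
Set Implicit Arguments. Unset Strict Implicit.
Variables (Om : Type) (zeta : set (seq Om)).
Local Notation I := (set_type zeta).
Local Notation Pt := (Dpow zeta).

Lemma cantor_T1 (c : D) (A : set D) : nbhs c A ->
  exists L : seq nat, forall d : D, (forall n, List.In n L -> d n = c n) -> A d.
Proof.
move=> /(@T1 nat (fun _ => bool)) [L [L1 L2]].
exists (map (@projT1 _ _) L) => d Hd; apply: L2 => p Lp.
rewrite (Hd (projT1 p)); last exact: In_map.
exact: nbhs_singleton (L1 p Lp).
Qed.

Definition cyl (x : Pt) (P : seq (I * nat)) : set Pt :=
  [set y : Pt | forall p, List.In p P -> y p.1 p.2 = x p.1 p.2].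

Lemma Dpow_T1aux (x : Pt) (L : seq {t : I & set D}) :
  (forall q, List.In q L -> nbhs (x (projT1 q)) (projT2 q)) ->
  exists P, forall y, cyl x P y -> forall q, List.In q L -> projT2 q (y (projT1 q)).
Proof.
elim: L => [|q L IH] H; first by exists [::].
have [|P HP] := IH; first by move=> q' Lq'; apply: H; right.
have [Lq HLq] := cantor_T1 (H q (or_introl erefl)).
exists (map (fun n => (projT1 q, n)) Lq ++ P) => y Hy q' /= [<-|]; last first.
  by apply: HP => p Pp; apply: Hy; apply: In_catr.
apply: HLq => n Ln.
by apply: (Hy (projT1 q, n)); apply: In_catl; apply: (In_map (fun n => (projT1 q, n))).
Qed.

Lemma Dpow_T1 (x : Pt) (U : set Pt) : nbhs x U -> exists P, cyl x P `<=` U.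
Proof.
move=> /(@T1 I (fun _ => D)) [L [L1 L2]].
have [P HP] := Dpow_T1aux L1.
by exists P => y /HP Hy; apply: L2.
Qed.

Lemma Dpow_T2 (x : Pt) (P : seq (I * nat)) : nbhs x (cyl x P).
Proof.
elim: P => [|p P IH].
  by apply: filterS (@filterT _ (nbhs x) _) => y _ p [].
have Hp : nbhs x [set y : Pt | y p.1 p.2 = x p.1 p.2].
  apply: (@T2 I (fun _ => D) x p.1 [set c : D | c p.2 = x p.1 p.2]).
  apply: (@T2 nat (fun _ => bool) (x p.1) p.2 [set b : bool | b = x p.1 p.2]).
  by [].
apply: filterS (filterI Hp IH) => y [Hy1 Hy2] q /= [<-//|]; exact: Hy2.
Qed.
End Glue.
Section Core.
Set Implicit Arguments. Unset Strict Implicit.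
Variables (Om : Type) (zeta : set (seq Om)).
Local Notation I := (set_type zeta).
Local Notation Pt := (Dpow zeta).
Variable idx : I -> nat.
Hypothesis idx_inj : injective idx.

Definition pre (s : seq bool) (c : nat -> bool) :=
  forall i, (i < size s)%N -> nth false s i = c i.
Definition ext (s s' : seq bool) := exists u, s' = s ++ u.
Definition incomp (s s' : seq bool) :=
  exists i, [/\ (i < size s)%N, (i < size s')%N & nth false s i <> nth false s' i].
Definition pfx (s t : I) := exists u, set_val t = set_val s ++ u.
Definition spfx (s t : I) := strict_ext (set_val s) (set_val t).
Definition agree (k : nat) (S : I -> Prop) (x y : Pt) :=
  forall s, S s -> forall i, (i < k - idx s)%N -> x s i = y s i.

Definition Inv k (sg : I -> Pt -> seq bool) :=
  forall t x y, agree k (pfx^~ t) x y -> sg t x = sg t y.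
Definition Inj k (sg : I -> Pt -> seq bool) :=
  forall t x y, agree k (spfx^~ t) x y ->
    (exists i, (i < k - idx t)%N /\ x t i <> y t i) -> incomp (sg t x) (sg t y).
Definition Sz k (sg : I -> Pt -> seq bool) := forall t x, (k - idx t <= size (sg t x))%N.
Definition Fs (sg : I -> Pt -> seq bool) :=
  exists L : seq I, forall t x, sg t x <> [::] -> List.In t L.
Definition Props k sg := [/\ Inv k sg, Inj k sg, Sz k sg & Fs sg].

Definition finsupp (tau : I -> seq bool) := exists L : seq I, forall t, tau t <> [::] -> List.In t L.
Definition Cyl (tau : I -> seq bool) : set Pt := [set z : Pt | forall t, pre (tau t) (z t)].
Definition Dense (G : set Pt) := forall tau, finsupp tau ->
  exists tau', [/\ finsupp tau', (forall t, ext (tau t) (tau' t)) & Cyl tau' `<=` G].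

Lemma ext_refl s : ext s s. Proof. by exists [::]; rewrite cats0. Qed.
Lemma ext_trans s1 s2 s3 : ext s1 s2 -> ext s2 s3 -> ext s1 s3.
Proof. by move=> [u ->] [v ->]; exists (u ++ v); rewrite catA. Qed.
Lemma ext_size s s' : ext s s' -> (size s <= size s')%N.
Proof. by move=> [u ->]; rewrite size_cat leq_addr. Qed.
Lemma ext_nth s s' i : ext s s' -> (i < size s)%N -> nth false s' i = nth false s i.
Proof. by move=> [u ->] Hi; rewrite nth_cat Hi. Qed.
Lemma pre_ext s s' c : ext s s' -> pre s' c -> pre s c.
Proof.
move=> E P i Hi; rewrite -(ext_nth E Hi); apply: P.
exact: leq_trans Hi (ext_size E).
Qed.
Lemma incomp_ext s1 s2 s1' s2' : incomp s1 s2 -> ext s1 s1' -> ext s2 s2' -> incomp s1' s2'.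
Proof.
move=> [i [H1 H2 H3]] E1 E2; exists i; split.
- exact: leq_trans H1 (ext_size E1).
- exact: leq_trans H2 (ext_size E2).
- by rewrite (ext_nth E1 H1) (ext_nth E2 H2).
Qed.
Lemma pre_incomp s s' c : pre s c -> pre s' c -> incomp s s' -> False.
Proof. by move=> P P' [i [H1 H2 H3]]; apply: H3; rewrite P // P'. Qed.
Lemma Cyl_ext tau tau' : (forall t, ext (tau t) (tau' t)) -> Cyl tau' `<=` Cyl tau.
Proof. by move=> E z Hz t; apply: pre_ext (E t) (Hz t). Qed.


Lemma I_eq (s t : I) : set_val s = set_val t -> s = t.
Proof. exact: val_inj. Qed.

Lemma pfx_refl t : pfx t t. Proof. by exists [::]; rewrite cats0. Qed.
Lemma spfx_pfx s t : spfx s t -> pfx s t. Proof. by move=> [u [_ E]]; exists u. Qed.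
Lemma pfx_cases s t : pfx s t -> s = t \/ spfx s t.
Proof.
move=> [u E]; case: u E => [|a u] E.
  by left; apply: I_eq; move: E; rewrite cats0 => ->.
by right; exists (a :: u).
Qed.
Lemma spfx_size s t : spfx s t -> (size (set_val s) < size (set_val t))%N.
Proof.
move=> [u [Hu ->]]; rewrite size_cat; case: u Hu => // a u _ /=.
by rewrite addnS ltnS leq_addr.
Qed.

Lemma agree_mono k k' (S S' : I -> Prop) x y : (k <= k')%N -> (forall s, S s -> S' s) ->
  agree k' S' x y -> agree k S x y.
Proof.
move=> kk SS A s Ss i Hi; apply: A; first exact: SS.
by apply: leq_trans Hi _; apply: leq_sub2r.
Qed.
Lemma agree_sym k S x y : agree k S x y -> agree k S y x.
Proof. by move=> A s Ss i Hi; rewrite A. Qed.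
Lemma agree_trans k S x y z : agree k S x y -> agree k S y z -> agree k S x z.
Proof. by move=> A B s Ss i Hi; rewrite A // B. Qed.

Definition splitk k (sg : I -> Pt -> seq bool) : I -> Pt -> seq bool :=
  fun t x => sg t x ++ (if (idx t <= k)%N then [:: x t (k - idx t)] else [::]).

Lemma splitk_ext k sg t x : ext (sg t x) (splitk k sg t x).
Proof. by eexists. Qed.

Definition pick (j : nat) : option I :=
  match pselect (exists t, idx t = j) with
  | left h => Some (projT1 (cid h))
  | right _ => None
  end.
Lemma pickP t : pick (idx t) = Some t.
Proof.
rewrite /pick; case: pselect => [h|[]]; last by exists t.
by congr Some; apply: idx_inj; rewrite (projT2 (cid h)).
Qed.
Definition ocons (o : option I) (s : seq I) := if o is Some a then a :: s else s.
Fixpoint upto (k : nat) : seq I :=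
  if k is k'.+1 then ocons (pick k) (upto k') else ocons (pick 0) [::].
Lemma uptoP k t : (idx t <= k)%N -> List.In t (upto k).
Proof.
elim: k => [|k IH].
  by rewrite leqn0 => /eqP E; rewrite /= -E pickP; left.
rewrite leq_eqVlt => /orP [/eqP E|H]; first by rewrite /= -E pickP; left.
have := IH H; rewrite /=; case: (pick k.+1) => //= a; by right.
Qed.

Lemma Props_split k sg : Props k sg -> Props k.+1 (splitk k sg).
Proof.
move=> [Iv Ij Sz0 [L HL]]; split.
- move=> t x y A; rewrite /splitk (Iv t x y); last first.
    by apply: agree_mono A.
  case: ifP => // Hk; congr (_ ++ [:: _]); apply: A; first exact: pfx_refl.
  by rewrite subSn // ltnSn.
- move=> t x y A [i [Hi Hxy]].
  case: (pselect (exists j, (j < k - idx t)%N /\ x t j <> y t j)) => [Ej|Nj].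
    apply: incomp_ext (splitk_ext _ _ _ _) (splitk_ext _ _ _ _).
    by apply: Ij => //; apply: agree_mono A.
  have Hk : (idx t <= k)%N by lia.
  have Ak : agree k (pfx^~ t) x y.
    move=> s /pfx_cases [->|Hs] j Hj.
      by apply: contra_notP Nj => Nxy; exists j.
    by apply: A => //; lia.
  have Hi' : i = k - idx t.
    have : ~ (i < k - idx t)%N by move=> Hlt; apply: Nj; exists i.
    lia.
  rewrite /splitk Hk (Iv t x y Ak); exists (size (sg t y)); split.
  + by rewrite size_cat /=; lia.
  + by rewrite size_cat /=; lia.
  + by rewrite !nth_cat ltnn subnn /= -Hi'.
- move=> t x; rewrite /splitk size_cat; have := Sz0 t x; case: ifP => /= H; lia.
- exists (L ++ upto k) => t x; rewrite /splitk; case: ifP => Hk H.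
    by apply: In_catr; apply: uptoP.
  by apply: In_catl; apply: (HL t x); rewrite cats0 in H.
Qed.


Lemma In_mem {T : eqType} (x : T) (s : seq T) : x \in s -> List.In x s.
Proof. elim: s => //= y s IH; rewrite in_cons => /orP [/eqP ->|/IH]; by [left|right]. Qed.

Fixpoint allpos (L : seq I) (k : nat) : seq (I * nat) :=
  if L is t :: L' then map (fun i => (t, i)) (iota 0 (k - idx t)) ++ allpos L' k else [::].
Lemma allposP L k t i : List.In t L -> (i < k - idx t)%N -> List.In (t, i) (allpos L k).
Proof.
elim: L => //= t' L IH [<- Hi|/IH H Hi]; last by apply: In_catr; apply: H.
apply: In_catl; apply: (In_map (fun i => (t', i))); apply: In_mem.
by rewrite mem_iota.
Qed.
Definition Qk k := allpos (upto k) k.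
Lemma QkP k x y : (forall p, List.In p (Qk k) -> x p.1 p.2 = y p.1 p.2) -> agree k setT x y.
Proof.
move=> H s _ i Hi; apply: (H (s, i)); apply: allposP => //.
by apply: uptoP; lia.
Qed.

Definition upd (r : Pt) (p : I * nat) (b : bool) : Pt :=
  fun t i => if pselect (t = p.1 /\ i = p.2) then b else r t i.
Fixpoint reps (Q : seq (I * nat)) : seq Pt :=
  if Q is p :: Q' then map (fun r => upd r p true) (reps Q') ++ map (fun r => upd r p false) (reps Q')
  else [:: ((fun _ _ => false) : Pt)].
Lemma reps_cover Q x : exists r, List.In r (reps Q) /\ forall p, List.In p Q -> x p.1 p.2 = r p.1 p.2.
Proof.
elim: Q => [|p Q [r [Hr HQ]]]; first by exists (fun _ _ => false); split => //; left.
exists (upd r p (x p.1 p.2)); split.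
  rewrite /=; case: (x p.1 p.2).
    by apply: In_catl; apply: (In_map (fun r => upd r p true)).
  by apply: In_catr; apply: (In_map (fun r => upd r p false)).
move=> p' /= Hp'; rewrite /upd; case: pselect => [[E1 E2]|Hn] /=.
  by rewrite E1 E2.
case: Hp' => [E|]; last exact: HQ.
by exfalso; apply: Hn; rewrite E.
Qed.

Lemma shrink1 k sg G r : Props k sg ->
  (exists tau', [/\ finsupp tau', (forall t, ext (sg t r) (tau' t)) & Cyl tau' `<=` G]) ->
  exists sg', [/\ Props k sg', (forall t x, ext (sg t x) (sg' t x)) &
     (forall x, agree k setT x r -> Cyl (fun t => sg' t x) `<=` G)].
Proof.
move=> [Iv Ij Sz0 [L HL]] [tau' [[L' HL'] Etau Ctau]].
pose sg' t x := if pselect (agree k (pfx^~ t) x r) then tau' t else sg t x.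
have Ext : forall t x, ext (sg t x) (sg' t x).
  move=> t x; rewrite /sg'; case: pselect => A; last exact: ext_refl.
  by rewrite (Iv t x r A).
exists sg'; split => //.
- split.
  + move=> t x y A; rewrite /sg'.
    case: pselect => Ax; case: pselect => Ay //.
    * by exfalso; apply: Ay; apply: agree_trans (agree_sym A) Ax.
    * by exfalso; apply: Ax; apply: agree_trans A Ay.
    * exact: Iv.
  + by move=> t x y A E; apply: incomp_ext (Ext _ _) (Ext _ _); apply: Ij.
  + by move=> t x; apply: leq_trans (Sz0 t x) (ext_size (Ext t x)).
  + exists (L ++ L') => t x; rewrite /sg'; case: pselect => A0 /= H.
      by apply: In_catr; apply: HL'.
    by apply: In_catl; apply: HL H.
- move=> x A z Hz; apply: Ctau => t; have := Hz t; rewrite /sg'.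
  case: pselect => // [[]]; by apply: agree_mono A.
Qed.

Lemma shrinkL k sg G (R : seq Pt) : Props k sg -> Dense G ->
  exists sg', [/\ Props k sg', (forall t x, ext (sg t x) (sg' t x)) &
     (forall r, List.In r R -> forall x, agree k setT x r -> Cyl (fun t => sg' t x) `<=` G)].
Proof.
move=> P DG; elim: R => [|r R [sg1 [P1 E1 C1]]].
  by exists sg; split => // t x; exact: ext_refl.
have [|sg2 [P2 E2 C2]] := @shrink1 k sg1 G r P1.
  apply: DG; have [_ _ _ [L HL]] := P1; exists L => t H; exact: HL H.
exists sg2; split.
- exact: P2.
- by move=> t x; apply: ext_trans (E1 t x) (E2 t x).
- move=> r' /= [<-|Hr'] x A; first exact: C2.
  apply: subset_trans (C1 r' Hr' x A); apply: Cyl_ext => t; exact: E2.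
Qed.

Lemma shrink k sg G : Props k sg -> Dense G ->
  exists sg', [/\ Props k sg', (forall t x, ext (sg t x) (sg' t x)) &
     (forall x, Cyl (fun t => sg' t x) `<=` G)].
Proof.
move=> P DG; have [sg' [P' E' C']] := shrinkL (reps (Qk k)) P DG.
exists sg'; split => // x.
have [r [Hr HQ]] := reps_cover (Qk k) x.
by apply: C' Hr _ _; apply: QkP.
Qed.

Lemma step k sg G : Props k sg -> Dense G ->
  exists sg', [/\ Props k.+1 sg', (forall t x, ext (sg t x) (sg' t x)) &
     (forall x, Cyl (fun t => sg' t x) `<=` G)].
Proof.
move=> P DG; have [sg1 [P1 E1 C1]] := shrink P DG.
exists (splitk k sg1); split.
- exact: Props_split.
- by move=> t x; apply: ext_trans (E1 t x) (splitk_ext _ _ _ _).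
- move=> x; apply: subset_trans (C1 x); apply: Cyl_ext => t; exact: splitk_ext.
Qed.


Lemma fusion (Gs : nat -> set Pt) (tau0 : I -> seq bool) :
  (forall n, Dense (Gs n)) -> finsupp tau0 ->
  exists S : nat -> I -> Pt -> seq bool,
    [/\ forall k, Props k (S k),
        forall k t x, ext (S k t x) (S k.+1 t x),
        forall k x, Cyl (fun t => S k.+1 t x) `<=` Gs k &
        forall t x, S 0%N t x = tau0 t].
Proof.
move=> HD [L0 HL0].
have stepex : forall k sg, exists sg', Props k sg ->
    [/\ Props k.+1 sg', (forall t x, ext (sg t x) (sg' t x)) &
     (forall x, Cyl (fun t => sg' t x) `<=` Gs k)].
  move=> k sg; case: (pselect (Props k sg)) => P; last by exists sg.
  by have [sg' H] := step P (HD k); exists sg'.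
pose st k sg := projT1 (cid (stepex k sg)).
have stP : forall k sg, Props k sg -> [/\ Props k.+1 (st k sg),
    (forall t x, ext (sg t x) (st k sg t x)) &
     (forall x, Cyl (fun t => st k sg t x) `<=` Gs k)].
  by move=> k sg; exact: (projT2 (cid (stepex k sg))).
pose fix S k := if k is k'.+1 then st k' (S k') else (fun t (_ : Pt) => tau0 t).
have PS : forall k, Props k (S k).
  elim=> [|k IH]; last by have [] := stP k (S k) IH.
  split.
  - by [].
  - by move=> t x y _ [i []]; rewrite sub0n.
  - by move=> t x.
  - by exists L0 => t x; exact: HL0.
exists S; split => //.
- by move=> k t x; have [_ E _] := stP k (S k) (PS k); exact: E.
- by move=> k x; have [_ _ E] := stP k (S k) (PS k); exact: E.
Qed.

Fixpoint posL (L : seq I) (tau : I -> seq bool) : seq (I * nat) :=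
  if L is t :: L' then map (fun i => (t, i)) (iota 0 (size (tau t))) ++ posL L' tau else [::].
Lemma posLP L tau t i : List.In t L -> (i < size (tau t))%N -> List.In (t, i) (posL L tau).
Proof.
elim: L => //= t' L IH [<- Hi|/IH H Hi]; last by apply: In_catr; apply: H.
apply: In_catl; apply: (In_map (fun i => (t', i))); apply: In_mem.
by rewrite mem_iota.
Qed.
Lemma Cyl_nbhs tau z : finsupp tau -> Cyl tau z -> nbhs z (Cyl tau).
Proof.
move=> [L HL] Cz; apply: filterS (Dpow_T2 z (posL L tau)) => y Hy t i Hi.
have Ht : tau t <> [::] by move=> E; rewrite E in Hi.
by rewrite (Cz t i Hi) (Hy (t, i)) //; apply: posLP => //; apply: HL.
Qed.

Section Limit.
Variable S : nat -> I -> Pt -> seq bool.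
Hypothesis SP : forall k, Props k (S k).
Hypothesis SE : forall k t x, ext (S k t x) (S k.+1 t x).

Definition Hm (x : Pt) : Pt := fun t i => nth false (S (i.+1 + idx t) t x) i.

Lemma SE_le k m t x : (k <= m)%N -> ext (S k t x) (S m t x).
Proof.
elim: m => [|m IH]; first by rewrite leqn0 => /eqP ->; exact: ext_refl.
rewrite leq_eqVlt => /orP [/eqP ->|H]; first exact: ext_refl.
by apply: ext_trans (IH H) (SE _ _ _).
Qed.

Lemma pre_Hm k t x : pre (S k t x) (Hm x t).
Proof.
move=> i Hi; rewrite /Hm.
have [_ _ Sz0 _] := SP (i.+1 + idx t).
have Hs := Sz0 t x.
have Hi' : (i < size (S (i.+1 + idx t) t x))%N by apply: leq_trans Hs; lia.
rewrite -(ext_nth (SE_le t x (leq_maxl k (i.+1 + idx t))) Hi).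
by rewrite -(ext_nth (SE_le t x (leq_maxr k (i.+1 + idx t))) Hi').
Qed.

Lemma Cyl_Hm k x : Cyl (fun t => S k t x) (Hm x).
Proof. by move=> t; exact: pre_Hm. Qed.

Lemma agree_down k (Xs : I -> Prop) x y :
  (forall s t, Xs t -> spfx s t -> Xs s) ->
  (forall t, Xs t -> exists c, pre (S k t x) c /\ pre (S k t y) c) -> agree k Xs x y.
Proof.
move=> Hdown Hc.
suff : forall n t, (size (set_val t) < n)%N -> Xs t -> forall i, (i < k - idx t)%N -> x t i = y t i.
  by move=> H t Xt i Hi; apply: (H (size (set_val t)).+1).
elim=> // n IH t Ht Xt.
have A : agree k (spfx^~ t) x y.
  move=> s Hs i Hi; apply: (IH s) => //; last exact: Hdown Xt Hs.
  by apply: leq_trans (spfx_size Hs) _.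
move=> i Hi; case: (pselect (x t i = y t i)) => // Hne; exfalso.
have [c [P1 P2]] := Hc t Xt.
have [_ Ij _ _] := SP k.
apply: (pre_incomp P1 P2); apply: Ij => //.
by exists i.
Qed.


Lemma Hm_fwd (Xs : I -> Prop) x y : (forall s t, Xs t -> pfx s t -> Xs s) ->
  (forall t, Xs t -> x t = y t) -> forall t, Xs t -> Hm x t = Hm y t.
Proof.
move=> Hd E t Xt; apply: funext => i; rewrite /Hm.
have [Iv _ _ _] := SP (i.+1 + idx t).
rewrite (Iv t x y) // => s Hs j Hj.
by rewrite (E s (Hd _ _ Xt Hs)).
Qed.

Lemma Hm_bwd (Xs : I -> Prop) x y : (forall s t, Xs t -> spfx s t -> Xs s) ->
  (forall t, Xs t -> Hm x t = Hm y t) -> forall t, Xs t -> x t = y t.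
Proof.
move=> Hd E t Xt; apply: funext => i.
have A : agree (i.+1 + idx t) Xs x y.
  apply: agree_down Hd _ => t' Xt'; exists (Hm x t'); split; first exact: pre_Hm.
  by rewrite E //; exact: pre_Hm.
by apply: A => //; lia.
Qed.

Lemma Hm_inj : injective Hm.
Proof.
move=> x y E; apply: funext => t.
by apply: (@Hm_bwd setT) => // t' _; rewrite E.
Qed.

Definition bnd (P : seq (I * nat)) := foldr (fun p m => maxn (p.2.+1 + idx p.1) m) 0%N P.
Lemma bndP P p : List.In p P -> (p.2.+1 + idx p.1 <= bnd P)%N.
Proof.
elim: P => //= q P IH [->|/IH H]; first exact: leq_maxl.
by apply: leq_trans H (leq_maxr _ _).
Qed.

Lemma Hm_cont : continuous Hm.
Proof.
move=> x U HU.
have [P HP] := Dpow_T1 HU.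
have N := Dpow_T2 x (Qk (bnd P)).
apply: filterS N => y Hy; apply: HP => p Pp.
have A := QkP Hy.
rewrite /Hm; have [Iv _ _ _] := SP (p.2.+1 + idx p.1).
congr nth; apply: Iv; apply: agree_mono A => //.
exact: bndP.
Qed.


Lemma Hm_open (U : set Pt) : open U -> exists V : set Pt, open V /\ Hm @` U = V `&` (Hm @` setT).
Proof.
move=> oU.
exists [set z | exists x k, [/\ U x, (forall y, agree k setT y x -> U y) & Cyl (fun t => S k t x) z]].
split.
  rewrite openE => z [x [k [Ux Hk Cz]]].
  have [_ _ _ [L HL]] := SP k.
  have Fz : finsupp (fun t => S k t x) by exists L => t; apply: HL.
  by apply: filterS (Cyl_nbhs Fz Cz) => w Cw; exists x, k.
apply/seteqP; split.
  move=> _ [x Ux <-]; split; last by exists x.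
  have : nbhs x U by apply: open_nbhs_nbhs.
  move=> /Dpow_T1 [P HP].
  exists x, (bnd P); split => //; last exact: Cyl_Hm.
  move=> y A; apply: HP => p Pp; apply: A => //.
  by have := bndP Pp; lia.
move=> z [[x [k [Ux Hk Cz]]] [y _ Ey]]; exists y => //; apply: Hk.
apply: (@agree_down k setT) => // t _; exists (z t); split; last exact: Cz.
by rewrite -Ey; exact: pre_Hm.
Qed.

End Limit.

End Core.

Section Main1.
Set Implicit Arguments. Unset Strict Implicit.
Variables (Om : Type) (zeta : set (seq Om)).
Local Notation I := (set_type zeta).
Local Notation Pt := (Dpow zeta).

Lemma ext_nil s : ext [::] s. Proof. by exists s. Qed.

Lemma ext_mkseq s (c : nat -> bool) M : pre s c -> (size s <= M)%N -> ext s (mkseq c M).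
Proof.
move=> P HM; exists (drop (size s) (mkseq c M)).
rewrite -{1}(cat_take_drop (size s) (mkseq c M)); congr (_ ++ _).
have Hsz : size (take (size s) (mkseq c M)) = size s by rewrite size_takel // size_mkseq.
apply: (@eq_from_nth _ false); first exact: Hsz.
move=> i; rewrite Hsz => Hi; rewrite nth_take // nth_mkseq; last by lia.
by rewrite P.
Qed.

Definition bndL (tau : I -> seq bool) (L : seq I) := foldr (fun t m => maxn (size (tau t)) m) 0%N L.
Lemma bndLP tau L t : List.In t L -> (size (tau t) <= bndL tau L)%N.
Proof.
elim: L => //= q L IH [->|/IH H]; first exact: leq_maxl.
by apply: leq_trans H (leq_maxr _ _).
Qed.
Definition bndQ (P : seq (I * nat)) := foldr (fun p m => maxn p.2.+1 m) 0%N P.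
Lemma bndQP P p : List.In p P -> (p.2 < bndQ P)%N.
Proof.
elim: P => //= q P IH [->|/IH H]; first exact: leq_maxl.
by apply: leq_trans H (leq_maxr _ _).
Qed.

Lemma TE (z : Pt) (G : set Pt) tau : nbhs z G -> Cyl tau z -> finsupp tau ->
  exists tau', [/\ finsupp tau', (forall t, ext (tau t) (tau' t)) & Cyl tau' `<=` G].
Proof.
move=> NG Cz [L HL].
have [P HP] := Dpow_T1 NG.
pose M := (bndL tau L + bndQ P)%N.
pose tau' t := if pselect (tau t <> [::] \/ exists i, List.In (t, i) P) then mkseq (z t) M else [::].
exists tau'; split.
- exists (L ++ map fst P) => t; rewrite /tau'; case: pselect => [a|na] /= Hne; last by exfalso; apply: Hne.
  case: a => [H|[i H]].
    by apply: In_catl; apply: HL.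
  by apply: In_catr; apply: (In_map fst H).
- move=> t; rewrite /tau'; case: pselect => [a|Hn] /=.
    case: (pselect (tau t = [::])) => [->|Hne]; first exact: ext_nil.
    apply: ext_mkseq; first exact: Cz.
    by apply: leq_trans (bndLP tau (HL t Hne)) (leq_addr _ _).
  case: (pselect (tau t = [::])) => [E|Hne]; first by rewrite E; exact: ext_refl.
  by exfalso; apply: Hn; left.
- move=> y Cy; apply: HP => p Pp.
  have Hp2 : (p.2 < M)%N by apply: leq_trans (bndQP Pp) (leq_addl _ _).
  have := Cy p.1 p.2; rewrite /tau'; case: pselect => [a|Hn] /=; last by exfalso; apply: Hn; right; exists p.2; case: p Pp {Hp2}.
  by rewrite size_mkseq nth_mkseq // => <-.
Qed.

End Main1.

Section Main2.
Variables (Om : Type) (zeta : set (seq Om)).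
Local Notation I := (set_type zeta).
Local Notation Pt := (Dpow zeta).

Lemma core_main (hz : in_Xi zeta) (O : set Pt) (Gs : nat -> set Pt) (z0 : Pt) :
  nbhs z0 O -> (forall n, Dense (Gs n)) ->
  exists Hm : Pt -> Pt, [/\ homeomorphism_onto Hm (Hm @` setT),
   (forall (x0 x1 : Pt) (xi : set (seq Om)), in_Xi xi -> xi `<=` zeta ->
      (restr_eq xi x0 x1 <-> restr_eq xi (Hm x0) (Hm x1))) &
   forall x, O (Hm x) /\ forall n, Gs n (Hm x)].
Proof.
move=> NO GD.
have hz' := hz; case: hz' => czeta zne zdown.
move/countable_injP: czeta => [f finj].
pose idx (t : I) := f (set_val t).
have idx_inj : injective idx.
  move=> s t E; apply: val_inj; apply: finj => //; exact: valP.
have [||tau0 [F0 _ C0]] := @TE _ zeta z0 O (fun _ => [::]) NO.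
- by move=> t i.
- by exists [::].
have [S [SP SE SG S0]] := fusion idx_inj GD F0.
exists (Hm idx S); split.
- split.
  + exact: Hm_cont.
  + exact: Hm_inj.
  + by [].
  + by move=> U oU; apply: Hm_open.
- move=> x0 x1 xi hxi xiz; case: (hxi) => _ _ xdown.
  have Hsp : forall s t : I, xi (set_val t) -> spfx s t -> xi (set_val s).
    move=> s t Xt Hs; apply: xdown Xt Hs _.
    by apply: zne; have := valP s; rewrite inE.
  have Hp : forall s t : I, xi (set_val t) -> pfx s t -> xi (set_val s).
    by move=> s t Xt /pfx_cases [->//|Hs]; apply: Hsp Xt Hs.
  split.
  + by move=> E t Xt; apply: (@Hm_fwd _ _ idx S SP (fun t => xi (set_val t))).
  + by move=> E t Xt; apply: (@Hm_bwd _ _ idx S SP SE (fun t => xi (set_val t))).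
- move=> x; split.
  + apply: C0 => t; rewrite -(S0 t x); exact: (pre_Hm SP SE).
  + move=> n; apply: (SG n x) => t; exact: (pre_Hm SP SE).
Qed.
End Main2.
Theorem corollary3p10 (Om : Type) (zeta : set (seq Om)) (X A : set (Dpow zeta)) :
  in_Xi zeta -> IPS X -> A `<=` X ->
  baire_property_rel X A -> ~ meager_rel X A ->
  exists Y : set (Dpow zeta), IPS Y /\ Y `<=` A.
Proof.
move=> hz [H [[Hc Hinj Himg Hop] Hxi]] AX [U [oU [N [HN Hcov]]]] nm.
have HX : forall z, X (H z) by move=> z; rewrite -Himg; exists z.
pose g (z : Dpow zeta) : set_type X := exist _ (H z) (mem_set (HX z)).
have gc : continuous g.
  by apply: (@continuous_comp_initial _ _ _ set_val g).
have gop : forall W, open W -> open (g @` W).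
  move=> W oW; have [V [oV E]] := Hop W oW.
  have -> : g @` W = set_val @^-1` V.
    apply/seteqP; split.
      move=> _ [w Ww <-]; have : (H @` W) (H w) by exists w.
      by rewrite E => -[].
    move=> u Vu; have : (V `&` X) (set_val u).
      by split => //; have := valP u; rewrite inE.
    rewrite -E => -[w Ww Ew]; exists w => //; apply: val_inj; exact: Ew.
  by move: oV; apply: (proj1 (continuousP _)); apply: initial_continuous.
have [u Uu] : exists u, U u.
  apply: contra_notP nm => nU; exists N; split => // a Aa; apply: Hcov; left; split => //.
  by move=> Ua; apply: nU; exists a.
have [z0 Ez0] : exists z0, g z0 = u.
  have Xu : X (set_val u) by have := valP u; rewrite inE.
  have : (H @` setT) (set_val u) by rewrite Himg.
  move=> [z0 _ E]; exists z0; apply: val_inj; exact: E.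
pose O := g @^-1` U.
have NO : nbhs z0 O.
  apply: open_nbhs_nbhs; split; last by rewrite /O /= Ez0.
  by move: oU; apply: (proj1 (continuousP _)).
pose Gs n := [set z | ~ closure (N n) (g z)].
have oGs : forall n, open (Gs n).
  move=> n; have : open (~` closure (N n)) by rewrite openC; exact: closed_closure.
  by apply: (proj1 (continuousP _)).
have GD : forall n, Dense (Gs n).
  move=> n tau Ft.
  have oC : open (Cyl tau) by rewrite openE => z Cz; exact: Cyl_nbhs.
  have [z [Cz Gz]] : exists z, Cyl tau z /\ Gs n z.
    case: (pselect (exists z, Cyl tau z /\ Gs n z)) => // Hn; exfalso.
    pose zt : Dpow zeta := fun t i => nth false (tau t) i.
    have Czt : Cyl tau zt by move=> t i.
    have Wsub : g @` Cyl tau `<=` interior (closure (N n)).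
      have oW := gop _ oC.
      move=> w Ww; rewrite /interior; apply: filterS (open_nbhs_nbhs (conj oW Ww)).
      move=> _ [z Cz <-]; case: (pselect (closure (N n) (g z))) => // ncl; exfalso; apply: Hn; exists z; split => //.
    have := Wsub (g zt) (ex_intro2 _ _ zt Czt erefl).
    by rewrite (HN n).
  apply: (TE (z := z)) => //.
  by apply: open_nbhs_nbhs; split => //; exact: oGs.
have [Hm [[Hmc Hminj Hmimg Hmop] HmX Hprop]] := core_main hz NO GD.
exists ((H \o Hm) @` setT); split.
- exists (H \o Hm); split.
  + split => //.
    * by move=> x; apply: continuous_comp; [exact: Hmc | exact: Hc].
    * exact: inj_comp.
    * move=> U' oU'.
      have [V1 [oV1 E1]] := Hmop U' oU'.
      have [V2 [oV2 E2]] := Hop V1 oV1.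
      exists V2; split => //; apply/seteqP; split.
        move=> _ [x Ux <-]; split; last by exists x.
        have : (Hm @` U') (Hm x) by exists x.
        rewrite E1 => -[V1x _].
        have : (H @` V1) (H (Hm x)) by exists (Hm x).
        by rewrite E2 => -[].
      move=> y [V2y [x _ Ey]].
      have : (V2 `&` X) y by split => //; rewrite -Ey; exact: HX.
      rewrite -E2 => -[w V1w Ew].
      have Ewx : w = Hm x by apply: Hinj; rewrite Ew -Ey.
      have : (V1 `&` (Hm @` setT)) (Hm x) by split; [rewrite -Ewx | exists x].
      rewrite -E1 => -[x' Ux' Ex'].
      by exists x' => //=; rewrite Ex'.
  + move=> x0 x1 xi h1 h2.
    exact: iff_trans (HmX x0 x1 xi h1 h2) (Hxi (Hm x0) (Hm x1) xi h1 h2).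
- move=> _ [x _ <-]; have [Ox GSx] := Hprop x.
  case: (pselect (A (H (Hm x)))) => // nA; exfalso.
  have : (@rel_to _ X A `\` U `|` U `\` @rel_to _ X A) (g (Hm x)) by right; split.
  move/Hcov => [n _ Nn].
  by apply: (GSx n); exact: subset_closure Nn.
Qed.
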